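(* Let $H=P_3$ (the path $1-2-3$) and let $G_i$ be a $d_i$-regular graph of order $n_i$ with adjacency eigenvalues $d_i=\lambda_1(A(G_i)),\dots,\lambda_{n_i}(A(G_i))$, $i=1,2,3$, with $d_1=d_3$. Let $G=\bigvee_{P_3}\{G_1,G_2,G_3\}$ and $s\in\mathbb{R}$. Set $N_1=N_3=n_2$, $N_2=n_1+n_3$, $\sigma(M_i(s))=\{s^2(d_i+N_i-1)-s\lambda_k(A(G_i))+1\}_{k=1}^{n_i}$, $$a(s)=s^2(d_1+n_2-1)-sd_1+1,\qquad b(s)=s^2(d_2+(n_1+n_3)-1)-sd_2+1.$$ Then, as multisets, $$\sigma(M_G(s))=\Big(\bigcup_{i=1}^3\sigma(M_i(s))\cup\Big\{\tfrac12\big(a(s)+b(s)\pm\sqrt{(a(s)-b(s))^2+4s^2n_2(n_1+n_3)}\big)\Big\}\Big)-\{a(s),b(s)\},$$ where one copy each of $a(s)$ and $b(s)$ is removed.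
   Context: For a simple undirected graph $G$ with adjacency matrix $A$, degree matrix $D$ and identity $I$, and real $s$, the deformed Laplacian matrix is $M_G(s)=I-sA+s^2(D-I)$; $\sigma(\cdot)$ is the multiset of eigenvalues. $H$-join: given a graph $H$ on vertex set $\{1,\dots,r\}$ and pairwise vertex-disjoint graphs $G_1,\dots,G_r$, $\bigvee_H\{G_i\}$ has vertex set $\bigcup_iV(G_i)$ and edges $\bigcup_iE(G_i)$ together with all edges $uv$, $u\in V(G_i)$, $v\in V(G_j)$, for each $ij\in E(H)$. *)

(* Defs.v *)
From HB Require Import structures.
From mathcomp Require Import all_boot all_order all_algebra.
From mathcomp Require Import reals.
Set Implicit Arguments. Unset Strict Implicit. Unset Printing Implicit Defensive.
Import Order.TTheory GRing.Theory Num.Theory.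
Local Open Scope ring_scope.

Definition simple_graph (T : finType) (e : rel T) : Prop :=
  symmetric e /\ irreflexive e.

Definition degree (T : finType) (e : rel T) (x : T) : nat := #|[set y | e x y]|.

Definition regular (T : finType) (e : rel T) (d : nat) : Prop :=
  forall x, degree e x = d.

Definition adjmx (R : nzRingType) (T : finType) (e : rel T) : 'M[R]_#|T| :=
  \matrix_(i, j) (e (enum_val i) (enum_val j))%:R.

Definition degmx (R : nzRingType) (T : finType) (e : rel T) : 'M[R]_#|T| :=
  \matrix_(i, j) ((degree e (enum_val i))%:R *+ (i == j)).

Definition deformed_laplacian (R : comNzRingType) (T : finType) (e : rel T) (s : R)
  : 'M[R]_#|T| :=
  1%:M - s *: adjmx R e + s ^+ 2 *: (degmx R e - 1%:M).

(* s is the multiset of eigenvalues (with algebraic multiplicity) of A. *)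
Definition spectrum (R : comNzRingType) (n : nat) (A : 'M[R]_n) (s : seq R) : Prop :=
  char_poly A = \prod_(x <- s) ('X - x%:P).

Definition Hjoin_vertex (r : nat) (V : 'I_r -> finType) : finType :=
  {i : 'I_r & V i}.

Definition Hjoin (r : nat) (H : rel 'I_r) (V : 'I_r -> finType)
  (E : forall i, rel (V i)) : rel (Hjoin_vertex V) :=
  fun u v => if tag u == tag v then E (tag u) (tagged u) (tagged_as u v)
             else H (tag u) (tag v).

(* The path P_3 on vertex set {1,2,3} represented as 'I_3 = {0,1,2}. *)
Definition P3 : rel 'I_3 :=
  fun i j => ((i : nat).+1 == j) || ((j : nat).+1 == i).

Definition v1 : 'I_3 := @Ordinal 3 0 isT.
Definition v2 : 'I_3 := @Ordinal 3 1 isT.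
Definition v3 : 'I_3 := @Ordinal 3 2 isT.

(* Main.v *)
Require Import Defs.
From HB Require Import structures.
From mathcomp Require Import all_boot all_order all_algebra all_fingroup.
From mathcomp Require Import reals.
From mathcomp Require Import ring lra zify.
Import Order.TTheory GRing.Theory Num.Theory.
Local Open Scope ring_scope.


Lemma sum_tagged (R : nmodType) (I : finType) (V : I -> finType)
  (F : {i : I & V i} -> R) :
  \sum_u F u = \sum_i \sum_(p : V i) F (Tagged V p).
Proof.
rewrite (partition_big (fun u => tag u) predT) //=; apply: eq_bigr => i _.
rewrite -(big_image _ _ (fun p => Tagged V p) predT) big_uniq /=; last first.
  by rewrite map_inj_uniq ?enum_uniq // => p q e; exact: eq_from_Tagged e.
apply: eq_bigl => u; apply/idP/idP.
  by case: u => j q /= /eqP ej; move: q; rewrite ej => q; apply: image_f.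
by case/imageP => p _ ->.
Qed.

Lemma sum_tagged_nat (I : finType) (V : I -> finType)
  (F : {i : I & V i} -> nat) :
  (\sum_u F u = \sum_i \sum_(p : V i) F (Tagged V p))%N.
Proof.
rewrite (partition_big (fun u => tag u) predT) //=; apply: eq_bigr => i _.
rewrite -(big_image _ _ (fun p => Tagged V p) predT) big_uniq /=; last first.
  by rewrite map_inj_uniq ?enum_uniq // => p q e; exact: eq_from_Tagged e.
apply: eq_bigl => u; apply/idP/idP.
  by case: u => j q /= /eqP ej; move: q; rewrite ej => q; apply: image_f.
by case/imageP => p _ ->.
Qed.

Lemma I3_cases (i : 'I_3) : i = v1 \/ i = v2 \/ i = v3.
Proof. by case: i => -[|[|[|//]]] ip; [left|right;left|right;right]; apply: val_inj. Qed.

Lemma sum_I3 (R : nmodType) (F : 'I_3 -> R) : \sum_i F i = F v1 + F v2 + F v3.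
Proof.
rewrite !big_ord_recl big_ord0 addr0 addrA.
have e2 : lift ord0 (lift ord0 ord0) = v3 :> 'I_3 by apply: val_inj.
have e1 : lift ord0 ord0 = v2 :> 'I_3 by apply: val_inj.
have e0 : ord0 = v1 :> 'I_3 by apply: val_inj.
by rewrite e2 e1 e0.
Qed.

Lemma sum_I3_nat (F : 'I_3 -> nat) : (\sum_i F i = F v1 + F v2 + F v3)%N.
Proof.
rewrite !big_ord_recl big_ord0 addn0 addnA.
have e2 : lift ord0 (lift ord0 ord0) = v3 :> 'I_3 by apply: val_inj.
have e1 : lift ord0 ord0 = v2 :> 'I_3 by apply: val_inj.
have e0 : ord0 = v1 :> 'I_3 by apply: val_inj.
by rewrite e2 e1 e0.
Qed.

Lemma degree_Hjoin (V : 'I_3 -> finType) (E : forall i, rel (V i)) (d : 'I_3 -> nat)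
  (reg : forall i, regular (E i) (d i)) i (p : V i) :
  degree (Hjoin P3 E) (Tagged V p) =
  (d i + (if i == v2 then #|V v1| + #|V v3| else #|V v2|))%N.
Proof.
rewrite /degree cardsE -sum1_card big_mkcond /= sum_tagged_nat sum_I3_nat.
rewrite -(reg i p) /degree cardsE -sum1_card [in RHS]big_mkcond /=.
have K j (q r : V j) : (Tagged V r \in Hjoin P3 E (Tagged V q)) = E j q r.
  by rewrite unfold_in /Hjoin /= eqxx tagged_asE.
have L j k (q : V j) (r : V k) : j != k -> (Tagged V r \in Hjoin P3 E (Tagged V q)) = P3 j k.
  by move=> jk; rewrite unfold_in /Hjoin /= (negbTE jk).
move: p; have [->|[->|->]] := I3_cases i => p.
all: rewrite (eq_bigr (fun r => if E _ p r then 1 else 0)%N); last by move=> r _; rewrite K.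
- rewrite [X in (_ + X + _)%N](eq_bigr (fun r => 1%N)) //.
  rewrite [X in (_ + _ + X)%N](eq_bigr (fun r => 0%N)) //.
  by rewrite big1_eq sum1_card cardT addn0.
- rewrite [X in (X + _ + _)%N](eq_bigr (fun r => 1%N)) //.
  rewrite [X in (_ + _ + X)%N](eq_bigr (fun r => 1%N)) //.
  rewrite !sum1_card !cardT eqxx; ring.
- rewrite [X in (X + _ + _)%N](eq_bigr (fun r => 0%N)) //.
  rewrite [X in (_ + X + _)%N](eq_bigr (fun r => 1%N)) //.
  rewrite big1_eq sum1_card cardT /=; ring.
Qed.


Lemma char_eval (R : comNzRingType) n (A : 'M[R]_n) x :
  (char_poly A).[x] = \det (x%:M - A).
Proof.
rewrite /char_poly -horner_evalE -det_map_mx; congr (\det _).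
by apply/matrixP => i j; rewrite !mxE /= horner_evalE hornerD hornerN hornerMn hornerX hornerC.
Qed.

Lemma prod_scale (R : comNzRingType) (I : Type) (r : seq I) (c : R) (f : I -> R) :
  c ^+ size r * \prod_(l <- r) f l = \prod_(l <- r) (c * f l).
Proof.
elim: r => [|a r IH]; first by rewrite !big_nil mulr1.
by rewrite !big_cons /= exprS -IH; ring.
Qed.

Lemma det_shift (R : fieldType) n (A : 'M[R]_n) (lam : seq R) y s :
  char_poly A = \prod_(l <- lam) ('X - l%:P) ->
  \det (y%:M + s *: A) = \prod_(l <- lam) (y + s * l).
Proof.
move=> hA.
have sz : size lam = n.
  by move: (size_char_poly A); rewrite hA size_prod_XsubC => -[].
have [->|s0] := eqVneq s 0.
  rewrite scale0r addr0 det_scalar.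
  rewrite (eq_bigr (fun _ => y)); last by move=> l _; rewrite mul0r addr0.
  rewrite big_const_seq count_predT sz; elim: n {A hA sz} => [|n IH]; first by rewrite expr0.
  by rewrite exprS IH.
have -> : y%:M + s *: A = (- s) *: ((- y / s)%:M - A).
  apply/matrixP => i j; rewrite !mxE; case: (i == j) => /=; field; exact: s0.
rewrite detZ -char_eval hA horner_prod -sz prod_scale.
apply: eq_bigr => l _; rewrite !hornerE; field; exact: s0.
Qed.

Lemma sum_enum (R : nmodType) (T : finType) (G : T -> R) :
  \sum_(i < #|T|) G (enum_val i) = \sum_v G v.
Proof. by rewrite -big_enum_val. Qed.

Lemma sum_tag_eq (R : nmodType) (I : finType) (V : I -> finType) i
  (G : {i : I & V i} -> R) :
  \sum_(v | tag v == i) G v = \sum_(q : V i) G (Tagged V q).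
Proof.
rewrite big_mkcond sum_tagged (bigD1 i) //= [X in _ + X]big1 ?addr0.
  by apply: eq_bigr => q _; rewrite /= eqxx.
by move=> j ji; apply: big1 => q _; rewrite /= (negbTE ji).
Qed.


Lemma det_mxsub_bij (R : comNzRingType) m n (f : 'I_m -> 'I_n) (A : 'M[R]_n) :
  bijective f -> \det (mxsub f f A) = \det A.
Proof.
move=> fb.
have e : m = n by rewrite -(card_ord m) -(card_ord n); apply: bij_eq_card fb.
subst n.
have finj : injective f := bij_inj fb.
pose p := perm finj.
have -> : mxsub f f A = row_perm p (col_perm p A).
  by apply/matrixP => i j; rewrite !mxE !permE.
rewrite row_permE col_permE !det_mulmx !det_perm odd_permV.
by case: (odd_perm p); rewrite /= ?expr0 ?expr1; ring.
Qed.

Lemma det_sylvester (R : comNzRingType) n m (A : 'M[R]_(n, m)) (B : 'M[R]_(m, n)) :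
  \det (1%:M + A *m B) = \det (1%:M + B *m A).
Proof.
pose M := block_mx 1%:M (- A) B 1%:M.
pose L := block_mx 1%:M A 0 (1%:M : 'M[R]_m).
have dL : \det L = 1 by rewrite det_ublock !det1 mulr1.
have e1 : L *m M = block_mx (1%:M + A *m B) 0 B 1%:M.
  by rewrite mulmx_block !mul1mx !mul0mx !add0r !mulmx1 addNr.
have e2 : M *m L = block_mx 1%:M 0 B (1%:M + B *m A).
  by rewrite mulmx_block !mulmx1 !mulmx0 !addr0 !mul1mx subrr addrC.
have := congr1 (fun X => \det X) e1; rewrite det_mulmx dL mul1r det_lblock det1 mulr1 => <-.
have := congr1 (fun X => \det X) e2; rewrite det_mulmx dL mulr1 det_lblock det1 mul1r => <-.
by [].
Qed.

Lemma poly_eq_cofinite (R : numFieldType) (p q : {poly R}) (S : seq R) :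
  (forall x, x \notin S -> p.[x] = q.[x]) -> p = q.
Proof.
move=> H; apply/eqP; rewrite -subr_eq0; apply/negPn/negP => nz.
pose w := (p - q) * \prod_(e <- S) ('X - e%:P).
have wnz : w != 0.
  by rewrite mulf_neq0 // monic_neq0 // monic_prod_XsubC.
pose rs := [seq k%:R | k <- iota 0 (size w)] : seq R.
have : (size rs < size w)%N.
  apply: max_poly_roots => //.
    apply/allP => x _; rewrite /root /w hornerM horner_prod mulf_eq0.
    case: (boolP (x \in S)) => xS.
      by rewrite prodf_seq_eq0; apply/orP; right; apply/hasP; exists x => //; rewrite !hornerE subrr eqxx.
    by rewrite !hornerE H // subrr eqxx.
  rewrite map_inj_uniq ?iota_uniq // => a b /eqP; rewrite eqr_nat => /eqP.
  done.
by rewrite size_map size_iota ltnn.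
Qed.


Definition hmap (V : 'I_3 -> finType) (k : 'I_(#|V v1| + (#|V v2| + #|V v3|))) :
   Hjoin_vertex V :=
  match split k with
  | inl a => Tagged V (enum_val a)
  | inr b => match split b with
             | inl c => Tagged V (enum_val c)
             | inr c => Tagged V (enum_val c) end
  end.

Lemma split_l m n (a : 'I_m) : split (lshift n a) = inl a.
Proof. exact: (unsplitK (inl a)). Qed.
Lemma split_r m n (a : 'I_n) : split (rshift m a) = inr a.
Proof. exact: (unsplitK (inr a)). Qed.

Lemma hmap_inj V : injective (@hmap V).
Proof.
move=> k l.
case: (split_ordP k) => a ->; [|case: (split_ordP a) => {}a ->];
case: (split_ordP l) => b ->; try (case: (split_ordP b) => {}b ->);
rewrite /hmap ?split_l ?split_r ?split_l ?split_r => e;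
  try (by move: (congr1 (fun u => val (tag u)) e) => /eqP);
  by rewrite (enum_val_inj (eq_from_Tagged e)).
Qed.

Lemma card_Hjoin V : #|Hjoin_vertex V| = (#|V v1| + (#|V v2| + #|V v3|))%N.
Proof.
rewrite -sum1_card sum_tagged_nat sum_I3_nat !sum1_card; ring.
Qed.

Lemma det_blockdiag (R : comNzRingType) (V : 'I_3 -> finType)
  (F : forall i, 'M[R]_#|V i|) (B : 'M[R]_#|Hjoin_vertex V|) :
  (forall i (p q : V i), B (enum_rank (Tagged V p)) (enum_rank (Tagged V q))
       = F i (enum_rank p) (enum_rank q)) ->
  (forall k l, tag (enum_val k) != tag (enum_val l) -> B k l = 0) ->
  \det B = \det (F v1) * \det (F v2) * \det (F v3).
Proof.
move=> HF H0.
pose phi k := enum_rank (@hmap V k).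
have phib : bijective phi.
  apply: inj_card_bij => [k l /enum_rank_inj /hmap_inj //|].
  by rewrite !card_ord card_Hjoin.
rewrite -(@det_mxsub_bij _ _ _ _ B phib).
have -> : mxsub phi phi B = block_mx (F v1) 0 0 (block_mx (F v2) 0 0 (F v3)).
  apply/matrixP => k l; rewrite mxE /phi.
  case: (split_ordP k) => a ->; [|case: (split_ordP a) => {}a ->];
  case: (split_ordP l) => b ->; try (case: (split_ordP b) => {}b ->);
  rewrite ?block_mxEul ?block_mxEur ?block_mxEdl ?block_mxEdr ?block_mxEul ?block_mxEur ?block_mxEdl ?block_mxEdr ?mxE /hmap ?split_l ?split_r ?split_l ?split_r;
  try (by rewrite HF !enum_valK);
  by rewrite H0 // !enum_rankK.
by rewrite det_ublock det_ublock mulrA.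
Qed.

Set Implicit Arguments. Unset Strict Implicit. Unset Printing Implicit Defensive.



Lemma sum_ind (R : comNzRingType) (I : finType) (a : I) (F : I -> R) :
  \sum_i (a == i)%:R * F i = F a.
Proof.
rewrite (bigD1 a) //= eqxx mul1r big1 ?addr0 // => i /negbTE.
by rewrite eq_sym => ->; rewrite mul0r.
Qed.

Lemma sum_indr (R : comNzRingType) (I : finType) (a : I) (F : I -> R) :
  \sum_i F i * (a == i)%:R = F a.
Proof. by under eq_bigr do rewrite mulrC; rewrite sum_ind. Qed.

Lemma sum_bool_card (R : comNzRingType) (T : finType) (b : pred T) :
  \sum_q (b q)%:R = (#|b|)%:R :> R.
Proof.
rewrite (eq_bigr (fun q => if b q then 1 else 0)); last by move=> q _; case: (b q).
by rewrite -big_mkcond sumr_const.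
Qed.

Lemma P3_irr i : P3 i i = false.
Proof. by have [->|[->|->]] := I3_cases i. Qed.


Definition Tg (V : 'I_3 -> finType) (k : 'I_#|Hjoin_vertex V|) : 'I_3 := tag (enum_val k).

Definition Xm (R : fieldType) (V : 'I_3 -> finType) (E : forall i, rel (V i)) (s x : R)
  : 'M[R]_#|Hjoin_vertex V| := x%:M - deformed_laplacian (Hjoin P3 E) s.

Definition Xf (R : fieldType) (V : 'I_3 -> finType) (E : forall i, rel (V i)) (s x : R) (u v : Hjoin_vertex V) : R :=
  (x - 1 - s ^+ 2 * ((degree (Hjoin P3 E) u)%:R - 1)) * (u == v)%:R
  + s * (Hjoin P3 E u v)%:R.

Lemma Xm_entry (R : fieldType) (V : 'I_3 -> finType) (E : forall i, rel (V i)) (s x : R) k l :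
  Xm E s x k l = Xf E s x (enum_val k) (enum_val l).
Proof.
rewrite /Xm /Xf /deformed_laplacian /adjmx /degmx !mxE (inj_eq enum_val_inj).
by case: (k == l) => /=; ring.
Qed.

Definition Bd (R : fieldType) (V : 'I_3 -> finType) (E : forall i, rel (V i)) (s x : R)
  : 'M[R]_#|Hjoin_vertex V| :=
  \matrix_(k, l) if Tg k == Tg l then Xm E s x k l else 0.

Definition Um (R : fieldType) (V : 'I_3 -> finType) : 'M[R]_(#|Hjoin_vertex V|, 3) :=
  \matrix_(k, i) (Tg k == i)%:R.

Definition Pm (R : fieldType) : 'M[R]_3 := \matrix_(i, j) (P3 i j)%:R.

Lemma UPU (R : fieldType) (V : 'I_3 -> finType) :
  @Um R V *m Pm R *m (@Um R V)^T = \matrix_(k, l) (P3 (Tg k) (Tg l))%:R.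
Proof.
apply/matrixP => k l; rewrite /Um /Pm !mxE.
under eq_bigr do rewrite !mxE.
under eq_bigr do under eq_bigr do rewrite !mxE.
under eq_bigr do rewrite sum_ind.
by rewrite sum_indr.
Qed.

Lemma X_split (R : fieldType) (V : 'I_3 -> finType) (E : forall i, rel (V i)) (s x : R) :
  Xm E s x = Bd E s x + s *: (@Um R V *m Pm R *m (@Um R V)^T).
Proof.
rewrite UPU; apply/matrixP => k l; rewrite /Bd !mxE.
case: (eqVneq (Tg k) (Tg l)) => [e|ne]; first by rewrite e P3_irr mulr0 addr0.
have kl : (k == l) = false by apply/negbTE; apply: contra ne => /eqP ->.
rewrite kl /Hjoin.
have -> : (tag (enum_val k) == tag (enum_val l)) = false by exact: negbTE ne.
rewrite /=; ring.
Qed.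



Definition Nn (V : 'I_3 -> finType) (i : 'I_3) : nat :=
  if i == v2 then (#|V v1| + #|V v3|)%N else #|V v2|.

Definition arow (R : fieldType) (V : 'I_3 -> finType) (d : 'I_3 -> nat) (s : R) i : R :=
  s ^+ 2 * ((d i + Nn V i)%:R - 1) - s * (d i)%:R + 1.

Lemma Hjoin_same (V : 'I_3 -> finType) (E : forall i, rel (V i)) i (p q : V i) :
  Hjoin P3 E (Tagged V p) (Tagged V q) = E i p q.
Proof. by rewrite /Hjoin /= eqxx tagged_asE. Qed.

Lemma rowsum (R : fieldType) (V : 'I_3 -> finType) (E : forall i, rel (V i))
  (d : 'I_3 -> nat) (reg : forall i, regular (E i) (d i)) (s x : R) k :
  \sum_l (if Tg k == Tg l then Xm E s x k l else 0) = x - @arow R V d s (Tg k).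
Proof.
have -> : \sum_l (if Tg k == Tg l then Xm E s x k l else 0) =
   \sum_(v : Hjoin_vertex V) (if tag (enum_val k) == tag v then Xf E s x (enum_val k) v else 0).
  rewrite -(@sum_enum _ _ (fun v : Hjoin_vertex V => if tag (enum_val k) == tag v then Xf E s x (enum_val k) v else 0)).
  by apply: eq_bigr => l _; rewrite Xm_entry.
rewrite /Tg; move: (enum_val k) => u; case: u => i p /=.
rewrite -big_mkcond /= (eq_bigl (fun v => tag v == i)); last by move=> v; rewrite eq_sym.
rewrite sum_tag_eq /Xf big_split /=.
under eq_bigr do rewrite eq_Tagged /= mulrC.
rewrite sum_ind.
under eq_bigr do rewrite Hjoin_same.
rewrite -mulr_sumr sum_bool_card.
have -> : #|E i p| = d i by rewrite -(reg i p) /degree cardsE.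
have -> : existT _ i p = Tagged V p by [].
rewrite (degree_Hjoin _ _ _ reg) /arow /Nn natrD; ring.
Qed.

Lemma BdU (R : fieldType) (V : 'I_3 -> finType) (E : forall i, rel (V i))
  (d : 'I_3 -> nat) (reg : forall i, regular (E i) (d i)) (s x : R) :
  Bd E s x *m @Um R V = @Um R V *m diag_mx (\row_i (x - @arow R V d s i)).
Proof.
apply/matrixP => k j.
have BdE l : Bd E s x k l = if Tg k == Tg l then Xm E s x k l else 0 by rewrite /Bd; exact: mxE.
have UmE l : @Um R V l j = (Tg l == j)%:R by rewrite /Um; exact: mxE.
rewrite mul_mx_diag [RHS]mxE [in RHS]UmE [X in _ = _ * X]mxE [LHS]mxE.
under eq_bigr do rewrite BdE UmE.
case: (eqVneq (Tg k) j) => [<-|ne].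
  rewrite mul1r -(@rowsum R V E d reg s x k); apply: eq_bigr => l _.
  by case: eqP => [->|]; rewrite ?eqxx ?mulr1 ?mul0r.
rewrite mul0r big1 // => l _.
case: eqP => [e|]; last by rewrite mul0r.
by rewrite -e (negbTE ne) mulr0.
Qed.

Lemma UtU (R : fieldType) (V : 'I_3 -> finType) :
  (@Um R V)^T *m @Um R V = diag_mx (\row_i (#|V i|)%:R).
Proof.
apply/matrixP => i j; rewrite !mxE /Um.
under eq_bigr do rewrite !mxE.
rewrite /Tg (@sum_enum _ _ (fun v : Hjoin_vertex V => (tag v == i)%:R * (tag v == j)%:R)).
rewrite (eq_bigr (fun v => (tag v == i)%:R * (i == j)%:R)); last first.
  by move=> v _; case: eqP => [->|]; rewrite ?mul0r.
rewrite -mulr_suml.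
rewrite (eq_bigr (fun v => if tag v == i then 1 else 0)); last by move=> v _; case: eqP.
rewrite -big_mkcond sum_tag_eq sumr_const.
by case: (i == j); rewrite /= ?mulr1 ?mulr0.
Qed.

Definition cc (R : fieldType) (V : 'I_3 -> finType) (d : 'I_3 -> nat) (s : R) i : R :=
  1 + s ^+ 2 * ((d i + Nn V i)%:R - 1).

Lemma Bd_block (R : fieldType) (V : 'I_3 -> finType) (E : forall i, rel (V i))
  (d : 'I_3 -> nat) (reg : forall i, regular (E i) (d i)) (s x : R) i (p q : V i) :
  Bd E s x (enum_rank (Tagged V p)) (enum_rank (Tagged V q)) =
  ((x - @cc R V d s i)%:M + s *: adjmx R (E i)) (enum_rank p) (enum_rank q).
Proof.
rewrite /Bd /Tg mxE !enum_rankK /= eqxx Xm_entry !enum_rankK /Xf /adjmx !mxE !enum_rankK.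
rewrite (degree_Hjoin _ _ _ reg) (inj_eq enum_rank_inj) eq_Tagged /= Hjoin_same /cc /Nn.
by case: (p == q) => /=; ring.
Qed.

Lemma Bd_off (R : fieldType) (V : 'I_3 -> finType) (E : forall i, rel (V i)) (s x : R) k l :
  tag (enum_val k) != tag (enum_val l) -> Bd E s x k l = 0.
Proof. by move=> ne; rewrite /Bd /Tg mxE (negbTE ne). Qed.

Lemma det_Bd (R : fieldType) (V : 'I_3 -> finType) (E : forall i, rel (V i))
  (d : 'I_3 -> nat) (reg : forall i, regular (E i) (d i)) (lam : 'I_3 -> seq R)
  (spec : forall i, spectrum (adjmx R (E i)) (lam i)) (s x : R) :
  \det (Bd E s x) = \prod_(l <- lam v1) (x - @cc R V d s v1 + s * l)
                  * \prod_(l <- lam v2) (x - @cc R V d s v2 + s * l)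
                  * \prod_(l <- lam v3) (x - @cc R V d s v3 + s * l).
Proof.
rewrite (@det_blockdiag R V (fun i => (x - @cc R V d s i)%:M + s *: adjmx R (E i)) (Bd E s x)).
- by rewrite !(det_shift _ _ _ _ _ _ (spec _)).
- by move=> i p q; rewrite (@Bd_block R V E d reg).
- by move=> k l; apply: Bd_off.
Qed.


Lemma det2 (R : comNzRingType) (A : 'M[R]_2) :
  \det A = A ord0 ord0 * A ord_max ord_max - A ord0 ord_max * A ord_max ord0.
Proof.
rewrite (expand_det_row _ ord0) !big_ord_recl big_ord0 /cofactor !det_mx11 !mxE /=.
have e1 : lift ord0 ord0 = ord_max :> 'I_2 by apply: val_inj.
have e2 : lift (lift ord0 ord0) ord0 = ord0 :> 'I_2 by apply: val_inj.
have e3 : lift ord_max ord0 = ord0 :> 'I_2 by apply: val_inj.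
rewrite ?e2 ?e1 ?e3 (_ : (0 + 0 = 0)%N) // (_ : (0 + bump 0 0 = 1)%N) // expr0 expr1.
ring.
Qed.

Lemma det3 (R : comNzRingType) (A : 'M[R]_3) :
  \det A = A v1 v1 * (A v2 v2 * A v3 v3 - A v2 v3 * A v3 v2)
         - A v1 v2 * (A v2 v1 * A v3 v3 - A v2 v3 * A v3 v1)
         + A v1 v3 * (A v2 v1 * A v3 v2 - A v2 v2 * A v3 v1).
Proof.
rewrite (expand_det_row _ v1) sum_I3 /cofactor !det2 !mxE.
have l10 : lift v1 ord0 = v2 by apply: val_inj.
have l1m : lift v1 ord_max = v3 by apply: val_inj.
have l20 : lift v2 ord0 = v1 by apply: val_inj.
have l2m : lift v2 ord_max = v3 by apply: val_inj.
have l30 : lift v3 ord0 = v1 by apply: val_inj.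
have l3m : lift v3 ord_max = v2 by apply: val_inj.
rewrite l10 l1m l20 l2m l30 l3m /=.
rewrite (_ : (0 + 0 = 0)%N) // (_ : (0 + 1 = 1)%N) // (_ : (0 + 2 = 2)%N) // expr0 expr1 expr2.
ring.
Qed.


Lemma deg_in_spec (R : fieldType) (T : finType) (e : rel T) (d : nat) (lam : seq R) :
  simple_graph e -> (0 < #|T|)%N -> regular e d -> spectrum (adjmx R e) lam ->
  (d%:R : R) \in lam.
Proof.
move=> [esym _] Tpos reg hA.
have : (char_poly (adjmx R e)).[d%:R] = 0.
  rewrite char_eval; apply/eqP/det0P.
  exists (const_mx 1).
    apply/negP => /eqP/matrixP/(_ 0 (Ordinal Tpos)); rewrite !mxE => /eqP.
    by rewrite oner_eq0.
  apply/matrixP => i j; rewrite !mxE.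
  rewrite (eq_bigr (fun k => (d%:R *+ (k == j) - (e (enum_val j) (enum_val k))%:R)));
    last by move=> k _; rewrite !mxE mul1r esym.
  rewrite sumrB (@sum_enum _ _ (fun v => (e (enum_val j) v)%:R)) sum_bool_card.
  rewrite (bigD1 j) //= eqxx big1 ?addr0; last by move=> k /negbTE ->.
  have -> : #|e (enum_val j)| = d by rewrite -(reg (enum_val j)) /degree cardsE.
  by rewrite subrr.
rewrite hA horner_prod => /eqP; rewrite prodf_seq_eq0 => /hasP [l ll].
by rewrite !hornerE subr_eq0 => /eqP ->.
Qed.


Theorem mainTheorem11 (R : realType) (V : 'I_3 -> finType)
  (E : forall i, rel (V i)) (d : 'I_3 -> nat) (lam : 'I_3 -> seq R) (s : R) :
  (forall i, simple_graph (E i)) ->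
  (forall i, (0 < #|V i|)%N) ->
  (forall i, regular (E i) (d i)) ->
  (forall i, spectrum (adjmx R (E i)) (lam i)) ->
  d v1 = d v3 ->
  let n i := #|V i| in
  let N i := if i == v2 then (n v1 + n v3)%N else n v2 in
  let sigmaM i := [seq s ^+ 2 * ((d i + N i)%:R - 1) - s * l + 1 | l <- lam i] in
  let a := s ^+ 2 * ((d v1 + n v2)%:R - 1) - s * (d v1)%:R + 1 in
  let b := s ^+ 2 * ((d v2 + (n v1 + n v3))%:R - 1) - s * (d v2)%:R + 1 in
  let disc := Num.sqrt ((a - b) ^+ 2 + 4 * s ^+ 2 * (n v2)%:R * (n v1 + n v3)%:R) in
  spectrum (deformed_laplacian (Hjoin P3 E) s)
    (rem a (rem b (sigmaM v1 ++ sigmaM v2 ++ sigmaM v3 ++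
                   [:: (a + b + disc) / 2; (a + b - disc) / 2]))).
Proof.
move=> simp Hpos reg spec d13 n N sigmaM a b disc.
rewrite /spectrum.
set L := sigmaM v1 ++ _.
have ea : @arow R V d s v1 = a by [].
have eb : @arow R V d s v2 = b by [].
have e3 : @arow R V d s v3 = a by rewrite /arow /a d13.
have din i : (d i)%:R \in lam i by apply: deg_in_spec.
have aS1 : a \in sigmaM v1 by apply/mapP; exists (d v1)%:R.
have aS3 : a \in sigmaM v3 by apply/mapP; exists (d v3)%:R; rewrite // /a d13.
have bS2 : b \in sigmaM v2 by apply/mapP; exists (d v2)%:R.
have bL : b \in L by rewrite /L !mem_cat bS2 orbT.
have aL : a \in rem b L.
  rewrite -has_pred1 has_count count_rem bL /L !count_cat.
  have c1 : (0 < count (pred1 a) (sigmaM v1))%N by rewrite -has_count has_pred1.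
  have c3 : (0 < count (pred1 a) (sigmaM v3))%N by rewrite -has_count has_pred1.
  by move: (leq_b1 (b == a)); lia.
apply: (@poly_eq_cofinite R _ _ (a :: b :: L)) => x.
rewrite !in_cons negb_or => /andP [xa]; rewrite negb_or => /andP [xb xL].
rewrite char_eval horner_prod.
under [in RHS]eq_bigr do rewrite hornerXsubC.
have hsig i : \prod_(e <- sigmaM i) (x - e) = \prod_(l <- lam i) (x - @cc R V d s i + s * l).
  by rewrite big_map; apply: eq_bigr => l _; rewrite /cc /Nn /N /n; ring.
have sigNZ i : \prod_(e <- sigmaM i) (x - e) != 0.
  rewrite prodf_seq_neq0; apply/allP => e eS /=; rewrite subr_eq0.
  apply: contraNneq xL => ->; rewrite /L !mem_cat.
  by have [ei|[ei|ei]] := I3_cases i; rewrite -ei eS ?orbT.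
have detBd : \det (Bd E s x) = \prod_(e <- sigmaM v1) (x - e) * \prod_(e <- sigmaM v2) (x - e)
     * \prod_(e <- sigmaM v3) (x - e).
  by rewrite (@det_Bd R V E d reg lam spec s x) !hsig.
have Bdnz : \det (Bd E s x) != 0 by rewrite detBd !mulf_neq0.
have Bdu : Bd E s x \in unitmx by rewrite unitmxE unitfE.
have bnz i : x - @arow R V d s i != 0.
  by have [->|[->|->]] := I3_cases i; rewrite ?ea ?eb ?e3 subr_eq0.
pose bi := \row_i (x - @arow R V d s i)^-1.
pose U := @Um R V.
have BUb : Bd E s x *m (U *m diag_mx bi) = U.
  rewrite mulmxA (@BdU R V E d reg s x) -mulmxA mulmx_diag.
  have -> : diag_mx (\row_j ((\row_i (x - @arow R V d s i)) 0 j * bi 0 j)) = 1%:M.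
    by apply/matrixP => i j; rewrite !mxE mulfV ?bnz.
  by rewrite mulmx1.
have XmE : x%:M - deformed_laplacian (Hjoin P3 E) s
    = Bd E s x *m (1%:M + U *m (s *: (diag_mx bi *m Pm R *m U^T))).
  rewrite -/(Xm E s x) X_split mulmxDr mulmx1 -!scalemxAr; congr (_ + _ *: _).
  by rewrite !mulmxA -(mulmxA (Bd E s x)) BUb.
rewrite XmE det_mulmx det_sylvester -scalemxAl -!mulmxA UtU !mulmxA.
rewrite mul_mx_diag mul_diag_mx det3 !mxE /= ea eb e3.
have key : \prod_(e <- L) (x - e) = (x - b) * ((x - a) * \prod_(e <- rem a (rem b L)) (x - e)).
  by rewrite (perm_big _ (perm_to_rem bL)) big_cons (perm_big _ (perm_to_rem aL)) big_cons.
have hL : \prod_(e <- L) (x - e) = \det (Bd E s x) * ((x - (a+b+disc)/2) * (x - (a+b-disc)/2)).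
  by rewrite /L !big_cat /= detBd !big_cons big_nil mulr1 !mulrA.
have nzab : (x - b) * (x - a) != 0 by rewrite mulf_neq0 // subr_eq0.
apply: (mulfI nzab); rewrite -[in RHS]mulrA -key hL.
have hd : disc ^+ 2 = (a - b) ^+ 2 + 4 * s ^+ 2 * (#|V v2|)%:R * ((#|V v1|)%:R + (#|V v3|)%:R).
  rewrite sqr_sqrtr -?natrD //.
  apply: addr_ge0; first exact: sqr_ge0.
  by apply: mulr_ge0; [apply: mulr_ge0; [apply: mulr_ge0; [exact: ler0n|exact: sqr_ge0]|exact: ler0n]|exact: ler0n].
have -> : (x - (a+b+disc)/2) * (x - (a+b-disc)/2) = (x - a) * (x - b) - (disc ^+ 2 - (a - b) ^+ 2) / 4.
  by field.
rewrite hd mulrCA; congr (_ * _).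
have xa' : x - a != 0 by rewrite subr_eq0.
have xb' : x - b != 0 by rewrite subr_eq0.
by field; rewrite xa' xb'.
Qed.
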